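(* Let $$C= \begin{pmatrix} -1& 2& 2\\ -2&1& 2\\ -2&2& 3 \end{pmatrix}.$$ For every positive integer $n$, writing $C^n(3,4,5)^\top=(x,y,z)^\top$, the circumradius of the triangle with side lengths $x,y,z$ is $R_n=2n^2+4n+\frac52$.
   Context: Triples are regarded as row vectors and $\top$ denotes transpose. The triple $C^n(3,4,5)^\top$ is a primitive Pythagorean triple (positive integers with $x^2+y^2=z^2$), so the triangle is a right triangle with hypotenuse $z$. *)

(* Defs.v *)
From HB Require Import structures.
From mathcomp Require Import all_boot all_order all_algebra.
Set Implicit Arguments. Unset Strict Implicit. Unset Printing Implicit Defensive.
Import Order.TTheory GRing.Theory Num.Theory.
Local Open Scope ring_scope.

Definition Cmat : 'M[int]_3 :=
  \matrix_(i < 3, j < 3)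
    nth 0 (nth [::] [:: [:: -1; 2; 2]; [:: -2; 1; 2]; [:: -2; 2; 3]] i) j.

Definition v345 : 'cV[int]_3 := \col_(i < 3) nth 0 [:: 3; 4; 5] i.

Definition Cn345 (n : nat) (k : nat) : int :=
  ((Cmat ^+ n) *m v345) (inord k) ord0.

(* Circumradius of a triangle with side lengths a, b, c:
   R = abc / (4 * Area), Area by Heron's formula, i.e.
   R = abc / sqrt((a+b+c)(-a+b+c)(a-b+c)(a+b-c)). *)
Definition circumradius (R : rcfType) (a b c : R) : R :=
  a * b * c / Num.sqrt ((a + b + c) * (- a + b + c) * (a - b + c) * (a + b - c)).

(* Main.v *)
Require Import Defs.
From HB Require Import structures.
From mathcomp Require Import all_boot all_order all_algebra.
From mathcomp Require Import ring lra.
Import Order.TTheory GRing.Theory Num.Theory.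
Local Open Scope ring_scope.

Definition xs (m : int) : seq int :=
  [:: 4 * m ^+ 2 + 8 * m + 3; 4 * m + 4; 4 * m ^+ 2 + 8 * m + 5].

Lemma Cpow n : (Cmat ^+ n) *m v345 = \col_(i < 3) nth 0 (xs n%:Z) i.
Proof.
elim: n => [|n IH].
  rewrite expr0 mul1mx; apply/matrixP => i j; rewrite !mxE.
  by case: i => [[|[|[|]]] ?].
rewrite exprS -mulmxA IH; apply/matrixP => i j.
rewrite !mxE !big_ord_recl big_ord0 !mxE.
have -> : Posz n.+1 = n%:Z + 1 by rewrite -addn1 PoszD.
move: (Posz n) => m.
case: i => [[|[|[|]]] ?] //=; ring.
Qed.

Lemma Cn345E n k : (k < 3)%N -> Cn345 n k = nth 0 (xs n%:Z) k.
Proof. by move=> hk; rewrite /Cn345 Cpow mxE inordK. Qed.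

Theorem mainTheorem9 (R : rcfType) (n : nat) (hn : (0 < n)%N) :
  circumradius ((Cn345 n 0)%:~R : R) (Cn345 n 1)%:~R (Cn345 n 2)%:~R
  = 2 * (n%:R) ^+ 2 + 4 * n%:R + 5 / 2.
Proof.
rewrite !Cn345E // /xs /circumradius.
have E : ((n%:Z)%:~R : R) = n%:R by [].
rewrite !(rmorphD, rmorphM, rmorphXn) /= E.
set N : R := n%:R.
have hN : 0 <= N by rewrite /N ler0n.
set a : R := _ + 3%:~R. set b : R := _ + 4%:~R. set c : R := _ + 5%:~R.
have ha : 0 < a by rewrite /a; nra.
have hb : 0 < b by rewrite /b; nra.
have -> : (a + b + c) * (- a + b + c) * (a - b + c) * (a + b - c) = (2 * a * b) ^+ 2.
  rewrite /a /b /c; ring.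
rewrite sqrtr_sqr ger0_norm; last nra.
rewrite /c /a /b; field; apply/andP; split; apply/negP => /eqP; nra.
Qed.
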